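(* Let $I$ be a semigroup (or a monoid), let $(A,\alpha)$ and $(B,\beta)$ be semi-invertible finite $I$-sets, and let $f:A\to B$ be a bijective $I$-equivariant function. Then the inverse $f^{-1}:B\to A$ is $I$-equivariant.
   Context: For a set $X$, $\mathrm{End}_l(X)$ denotes self-maps of $X$ written on the left with product $f\circ g$ ($g$ first); $\mathrm{End}_r(X)$ denotes self-maps written on the right, $x\mapsto(x)f$, with $(x)(fg)=((x)f)g$. An $I$-set is a set $X$ with a pair $\xi=(\xi_l,\xi_r)$ of semigroup (resp. monoid) homomorphisms $\xi_l:I\to\mathrm{End}_l(X)$, $\xi_r:I\to\mathrm{End}_r(X)$ with $(\xi_l(i)(x))\xi_r(j)=\xi_l(i)((x)\xi_r(j))$ for all $i,j,x$. A function $f:X\to Y$ between $I$-sets $(X,\xi)$, $(Y,\eta)$ is $I$-equivariant if $(f(\xi_l(i)(x)))\eta_r(i)=\eta_l(i)(f((x)\xi_r(i)))$ for all $i\in I$, $x\in X$. An $I$-set $(X,\xi)$ is semi-invertible if for every $i\in I$, at least one of $\xi_l(i)$, $\xi_r(i)$ is a bijection of $X$. *)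

(* Defs.v *)
From mathcomp Require Import all_boot.
Set Implicit Arguments. Unset Strict Implicit. Unset Printing Implicit Defensive.

(* An I-set structure on X, for I with multiplication [mul].
   [xl i] is xi_l(i) (a map written on the left),
   [xr i x] stands for (x)xi_r(i) (a map written on the right). *)
Definition is_Iset (I X : Type) (mul : I -> I -> I)
  (xl xr : I -> X -> X) : Prop :=
  [/\
      (forall i j x, xl (mul i j) x = xl i (xl j x)),
      (forall i j x, xr (mul i j) x = xr j (xr i x)) &
      (forall i j x, xr j (xl i x) = xl i (xr j x))].

Definition semi_invertible (I X : Type) (xl xr : I -> X -> X) : Prop :=
  forall i, bijective (xl i) \/ bijective (xr i).

Definition equivariant (I X Y : Type) (xl xr : I -> X -> X)
  (yl yr : I -> Y -> Y) (f : X -> Y) : Prop :=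
  forall i x, yr i (f (xl i x)) = yl i (f (xr i x)).

(* Main.v *)
Require Import Defs.
From mathcomp Require Import all_boot all_fingroup.

Lemma iter_inj (T : Type) (h : T -> T) N : 0 < N -> injective (iter N h) -> injective h.
Proof.
case: N => // N _ H x y e; apply: H; by rewrite !iterSr e.
Qed.

Lemma surj_inj (T : finType) (h k : T -> T) : cancel k h -> injective h.
Proof.
move=> kh; have /injF_bij [k' k1 k2] : injective k := can_inj kh.
have E : forall x, h x = k' x by move=> x; rewrite -{1}(k2 x) kh.
by move=> x y; rewrite !E => /(can_inj k2).
Qed.

Lemma common_exp (T U : finType) (p : T -> T) (q : U -> U) :
  injective p -> injective q ->
  exists N, 0 < N /\ (forall x, iter N p x = x) /\ (forall y, iter N q y = y).
Proof.
move=> ip iq; set pp := perm ip; set qq := perm iq.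
exists (#[pp]%g * #[qq]%g)%N; split; first by rewrite muln_gt0 !order_gt0.
have P1 : forall n x, iter n p x = (pp ^+ n)%g x.
  by move=> n x; rewrite permX; apply: eq_iter => z; rewrite permE.
have P2 : forall n x, iter n q x = (qq ^+ n)%g x.
  by move=> n x; rewrite permX; apply: eq_iter => z; rewrite permE.
split=> x; [rewrite P1 expgM expg_order | rewrite P2 mulnC expgM expg_order];
  by rewrite expg1n perm1.
Qed.

Lemma core1 (T : finType) (a r b s : T -> T) :
  (forall x, a (r x) = r (a x)) -> (forall x, b (s x) = s (b x)) ->
  (forall x, s (a x) = b (r x)) -> bijective a -> bijective b ->
  forall x, r (b x) = a (s x).
Proof.
move=> ar bs sa [ai aK aiK] [bi bK biK].
have S : forall x, s x = b (r (ai x)) by move=> x; rewrite -sa aiK.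
have C : forall w, b (r (ai w)) = r (ai (b w)).
  move=> w; apply: (can_inj bK); by rewrite -S bs S.
move=> x; by rewrite S C ar aiK.
Qed.

Lemma core2 (T : finType) (a r b s : T -> T) :
  (forall x, a (r x) = r (a x)) -> (forall x, b (s x) = s (b x)) ->
  (forall x, s (a x) = b (r x)) -> bijective r -> bijective s ->
  forall x, r (b x) = a (s x).
Proof.
move=> ar bs sa [ri rK riK] [si sK siK].
have B : forall x, b x = s (a (ri x)) by move=> x; rewrite sa riK.
have C : forall w, a (ri (s w)) = s (a (ri w)).
  move=> w; apply: (can_inj sK); by rewrite -B bs B.
move=> x; by rewrite B -C -ar riK.
Qed.

Theorem mainTheorem5 (I : Type) (mul : I -> I -> I) (mulA : associative mul)
  (A B : finType) (al ar : I -> A -> A) (bl br : I -> B -> B)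
  (HA : is_Iset mul al ar) (HB : is_Iset mul bl br)
  (sA : semi_invertible al ar) (sB : semi_invertible bl br)
  (f : A -> B) (g : B -> A) (fK : cancel f g) (gK : cancel g f)
  (ef : equivariant al ar bl br f) :
  equivariant bl br al ar g.
Proof.
case: HA => Al Ar Ac; case: HB => Bl Br Bc.
move=> i y.
set a := al i; set r := ar i; set b := bl i; set s := br i.
set b' := fun x => g (b (f x)); set s' := fun x => g (s (f x)).
pose pw := fix pw k := if k is k'.+1 then mul i (pw k') else i.
have Pal : forall k x, al (pw k) x = iter k.+1 a x.
  by elim=> // k IH x; rewrite /= Al IH.
have Par : forall k x, ar (pw k) x = iter k.+1 r x.
  by elim=> // k IH x; rewrite /= Ar IH -iterSr.
have Pbl : forall k x, bl (pw k) x = iter k.+1 b x.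
  by elim=> // k IH x; rewrite /= Bl IH.
have Pbr : forall k x, br (pw k) x = iter k.+1 s x.
  by elim=> // k IH x; rewrite /= Br IH -iterSr.
have Pef : forall k x, iter k.+1 s (f (iter k.+1 a x)) = iter k.+1 b (f (iter k.+1 r x)).
  by move=> k x; rewrite -Pal -Par -Pbl -Pbr ef.
have PefN : forall N x, 0 < N -> iter N s (f (iter N a x)) = iter N b (f (iter N r x)).
  by case=> // N x _; apply: Pef.
have ar1 : forall x, a (r x) = r (a x) by move=> x; rewrite /a /r Ac.
have bs1 : forall x, b' (s' x) = s' (b' x) by move=> x; rewrite /b' /s' !gK /b /s Bc.
have sa1 : forall x, s' (a x) = b' (r x) by move=> x; rewrite /s' /b' /s /a ef.
have bijT : forall h : B -> B, injective h -> bijective (fun x => g (h (f x))).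
  move=> h ih; apply: injF_bij => x z /(can_inj gK) /ih /(can_inj fK) //.
suff H : forall x, r (b' x) = a (s' x).
  by have := H (g y); rewrite /b' /s' gK.
have [ia|ir] := sA i; have [ib|is0] := sB i.
- by apply: core1 => //; apply: bijT; apply: bij_inj.
-
  have [N [N0 [Na Ns]]] := @common_exp _ _ _ _ (bij_inj ia) (bij_inj is0).
  have E : forall x, f x = iter N b (f (iter N r x)).
    by move=> x; rewrite -PefN // Na Ns.
  have ib : injective b.
    apply: (@iter_inj _ _ N N0); apply: (@surj_inj _ _ (fun z => f (iter N r (g z)))).
    by move=> z; rewrite -E gK.
  apply: core1 => //. by apply: bijT.
-
  have [N [N0 [Nr Nb]]] := @common_exp _ _ _ _ (bij_inj ir) (bij_inj ib).
  have E : forall x, iter N s (f (iter N a x)) = f x.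
    by move=> x; rewrite PefN // Nr Nb.
  have is0 : injective s.
    apply: (@iter_inj _ _ N N0); apply: (@surj_inj _ _ (fun z => f (iter N a (g z)))).
    by move=> z; rewrite E gK.
  apply: core2 => //. by apply: bijT.
- by apply: core2 => //; apply: bijT; apply: bij_inj.
Qed.
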